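(* Let $D$ be a digraph and $X, Y \subseteq V(D)$ such that no vertex of $X$ has an ingoing edge and no vertex of $Y$ has an outgoing edge. Suppose that $X$ is joinable to $Y$ and that $X'$ is joinable to $Y'$ for some $X' \subseteq X$ and $Y' \subseteq Y$ with $|X \setminus X'| < \infty$. Then there is some $Y'' \subseteq Y$ such that $X$ is joinable to $Y''$ and $|Y'' \setminus Y'| \le |X \setminus X'|$.
   Context: Digraphs have no loops or parallel edges. An $(A,B)$-path is a directed path whose initial vertex is in $A$, whose terminal vertex is in $B$, and which is internally disjoint from $A \cup B$; an $(A,B)$-path-system is a set of pairwise vertex-disjoint $(A,B)$-paths. $V^-(\mathcal{P})$ is the set of initial vertices of the paths in $\mathcal{P}$. $A$ is joinable to $B$ (in $D$) if there is an $(A,B)$-path-system $\mathcal{P}$ in $D$ with $V^-(\mathcal{P}) = A$. *)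

(* Defs.v *)
(* Digraphs on an arbitrary (possibly infinite) vertex type V,
   given by an edge relation E (no parallel edges automatically; loops are
   excluded by a hypothesis of the theorem). *)
From Stdlib Require Import List.
Import ListNotations.

Section Digraphs.
Context {V : Type}.

Fixpoint is_walk (E : V -> V -> Prop) (l : list V) : Prop :=
  match l with
  | x :: ((y :: _) as t) => E x y /\ is_walk E t
  | _ => True
  end.

Definition dpath (E : V -> V -> Prop) (p : list V) : Prop :=
  p <> [] /\ NoDup p /\ is_walk E p.

Definition AB_path (E : V -> V -> Prop) (A B : V -> Prop) (p : list V) : Prop :=
  dpath E p /\
  ((exists a, p = [a] /\ A a /\ B a) \/
   (exists a mid b, p = a :: mid ++ [b] /\ A a /\ B b /\
      forall v, In v mid -> ~ A v /\ ~ B v)).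

Definition AB_path_system (E : V -> V -> Prop) (A B : V -> Prop)
    (P : list V -> Prop) : Prop :=
  (forall p, P p -> AB_path E A B p) /\
  (forall p q, P p -> P q -> p <> q -> forall v, In v p -> ~ In v q).

Definition init_vertices (P : list V -> Prop) : V -> Prop :=
  fun a => exists p, P p /\ hd_error p = Some a.

Definition joinable (E : V -> V -> Prop) (A B : V -> Prop) : Prop :=
  exists P, AB_path_system E A B P /\ (forall a, init_vertices P a <-> A a).

Definition subset (A B : V -> Prop) : Prop := forall v, A v -> B v.

Definition setminus (A B : V -> Prop) : V -> Prop := fun v => A v /\ ~ B v.

Definition finite_set (A : V -> Prop) : Prop :=
  exists l : list V, forall v, A v -> In v l.

Definition card_le (A B : V -> Prop) : Prop :=
  exists f : V -> V, (forall v, A v -> B (f v)) /\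
    (forall u v, A u -> A v -> f u = f v -> u = v).

End Digraphs.

(* Main.v *)
Require Import Defs.
From Stdlib Require Import List Classical ClassicalEpsilon PeanoNat Lia.
Import ListNotations.


Lemma nodup_disj {A} (l1 l2 : list A) w :
  NoDup (l1 ++ l2) -> In w l1 -> In w l2 -> False.
Proof.
  induction l1 as [|a l1 IH]; simpl; intros H H1 H2; [easy|].
  inversion H as [|a' l' Hn Hnd]; subst. destruct H1 as [<-|H1].
  - apply Hn. apply in_or_app; now right.
  - eauto.
Qed.

Lemma nodup_split_unique {A} (a1 b1 a2 b2 : list A) c :
  NoDup (a1 ++ c :: b1) -> a1 ++ c :: b1 = a2 ++ c :: b2 -> a1 = a2 /\ b1 = b2.
Proof.
  intros ND Heq. destruct (app_eq_app _ _ _ _ Heq) as [m [[E1 E2]|[E1 E2]]].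
  - destruct m as [|d m]; simpl in E2.
    + rewrite app_nil_r in E1. inversion E2. subst. auto.
    + inversion E2; subst. exfalso. rewrite Heq in ND.
      apply (nodup_disj (a2 ++ [d]) (m ++ d :: b1) d).
      * rewrite <- app_assoc. exact ND.
      * apply in_or_app; right; now left.
      * apply in_or_app; right; now left.
  - destruct m as [|d m]; simpl in E2.
    + rewrite app_nil_r in E1. inversion E2. subst. auto.
    + inversion E2; subst. exfalso.
      apply (nodup_disj (a1 ++ [d]) (m ++ d :: b2) d).
      * rewrite <- app_assoc. exact ND.
      * apply in_or_app; right; now left.
      * apply in_or_app; right; now left.
Qed.

Lemma nodup_before {A} (l a b a' b' : list A) c u w :
  NoDup l -> l = a ++ c :: b -> In w b -> l = a' ++ u :: b' -> In w a' -> In c a'.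
Proof.
  intros ND E1 Hw E2 Hw'. rewrite E1 in E2, ND.
  rewrite E2 in ND.
  destruct (app_eq_app _ _ _ _ E2) as [m [[F1 F2]|[F1 F2]]].
  - exfalso. apply (nodup_disj a' (u :: b') w ND Hw').
    rewrite F2. apply in_or_app. right. now right.
  - destruct m as [|d m]; simpl in F2.
    + exfalso. apply (nodup_disj a' (u :: b') w ND Hw').
      inversion F2; subst. now right.
    + inversion F2; subst. apply in_or_app. right. now left.
Qed.

Lemma first_hit_unique {A} (T : A -> Prop) pre1 c1 s1 pre2 c2 s2 :
  pre1 ++ c1 :: s1 = pre2 ++ c2 :: s2 -> T c1 -> T c2 ->
  (forall w, In w pre1 -> ~ T w) -> (forall w, In w pre2 -> ~ T w) ->
  pre1 = pre2 /\ c1 = c2 /\ s1 = s2.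
Proof.
  revert pre2. induction pre1 as [|a pre1 IH]; intros [|b pre2]; simpl;
    intros Heq T1 T2 H1 H2.
  - inversion Heq; auto.
  - inversion Heq; subst. exfalso. apply (H2 b); auto.
  - inversion Heq; subst. exfalso. apply (H1 c2); auto.
  - inversion Heq; subst.
    destruct (IH pre2 H3 T1 T2) as [-> [-> ->]]; auto.
Qed.

Lemma first_hit_exists {A} (T : A -> Prop) (p : list A) :
  (forall w, In w p -> ~ T w) \/
  exists pre c suf, p = pre ++ c :: suf /\ T c /\ forall w, In w pre -> ~ T w.
Proof.
  induction p as [|a p IH].
  - left. simpl. tauto.
  - destruct (classic (T a)) as [Ha|Ha].
    + right. exists [], a, p. simpl. tauto.
    + destruct IH as [IH|[pre [c [suf [-> [Tc Hpre]]]]]].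
      * left. simpl. intros w [<-|Hw]; auto.
      * right. exists (a :: pre), c, suf. simpl. split; auto. split; auto.
        intros w [<-|Hw]; auto.
Qed.

Lemma walk_app {V} (E : V -> V -> Prop) l c r :
  is_walk E (l ++ c :: r) <-> is_walk E (l ++ [c]) /\ is_walk E (c :: r).
Proof.
  induction l as [|a l IH]; simpl.
  - tauto.
  - destruct l as [|b l]; simpl in *.
    + destruct r; simpl; tauto.
    + rewrite IH. tauto.
Qed.

Lemma walk_edge {V} (E : V -> V -> Prop) l u v r :
  is_walk E (l ++ u :: v :: r) -> E u v.
Proof.
  intros H. apply walk_app in H. destruct H as [_ H]. simpl in H. tauto.
Qed.

Lemma suffix_last {A} (qa s l : list A) b :
  qa ++ s = l ++ [b] -> s <> [] -> exists l', s = l' ++ [b].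
Proof.
  intros H Hs. destruct (exists_last Hs) as [s' [b' ->]].
  rewrite app_assoc in H. apply app_inj_tail in H. destruct H as [_ ->].
  eauto.
Qed.

Lemma AB_facts {V} (E : V -> V -> Prop) A B p :
  AB_path E A B p -> NoDup p /\ is_walk E p /\ (exists a t, p = a :: t /\ A a) /\
    (exists l b, p = l ++ [b] /\ B b).
Proof.
  intros [[Hne [Hnd Hw]] [[a [-> [Ha Hb]]] | [a [mid [b [-> [Ha [Hb _]]]]]]]].
  - repeat split; auto. eauto. exists [], a. auto.
  - repeat split; auto. eauto. exists (a :: mid), b. auto.
Qed.

Lemma mkAB {V} (E : V -> V -> Prop) (X Y A B : V -> Prop) p a t l b :
  (forall u v, X v -> ~ E u v) -> (forall y w, Y y -> ~ E y w) ->
  subset A X -> subset B Y -> NoDup p -> is_walk E p ->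
  p = a :: t -> A a -> p = l ++ [b] -> B b -> AB_path E A B p.
Proof.
  intros noin noout HA HB Hnd Hw Ep Ha El Hb.
  split; [split; [subst; discriminate | split; auto]|].
  destruct t as [|t0 t'].
  - left. exists a. subst p. split; auto.
    assert (l ++ [b] = [] ++ [a]) by (rewrite <- El; reflexivity).
    apply app_inj_tail in H. destruct H as [_ ->]. auto.
  - right. assert (Hne : t0 :: t' <> []) by discriminate.
    destruct (exists_last Hne) as [mid [b' Em]].
    assert (b' = b).
    { assert (l ++ [b] = (a :: mid) ++ [b']) by (rewrite <- El, Ep, Em; reflexivity).
      apply app_inj_tail in H. destruct H; auto. }
    subst b'. exists a, mid, b. rewrite Ep, Em. split; [reflexivity|]. split; auto. split; auto.
    intros v Hv. destruct (in_split _ _ Hv) as [m1 [m2 Emid]].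
    assert (Hw' : is_walk E (a :: mid ++ [b])) by (rewrite <- Em, <- Ep; auto).
    split.
    + intros Av. apply HA in Av.
      assert (Hne2 : a :: m1 <> []) by discriminate.
      destruct (exists_last Hne2) as [k [u Ek]].
      assert (Hf : a :: mid ++ [b] = k ++ u :: v :: (m2 ++ [b])).
      { rewrite Emid. rewrite <- app_assoc. simpl.
        change (a :: m1 ++ v :: m2 ++ [b]) with ((a :: m1) ++ v :: m2 ++ [b]).
        rewrite Ek. rewrite <- app_assoc. reflexivity. }
      rewrite Hf in Hw'. apply walk_edge in Hw'. exact (noin u v Av Hw').
    + intros Bv. apply HB in Bv.
      destruct m2 as [|n0 m2].
      * assert (Hf : a :: mid ++ [b] = (a :: m1) ++ v :: b :: []).
        { rewrite Emid. simpl. rewrite <- app_assoc. reflexivity. }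
        rewrite Hf in Hw'. apply walk_edge in Hw'. exact (noout v b Bv Hw').
      * assert (Hf : a :: mid ++ [b] = (a :: m1) ++ v :: n0 :: (m2 ++ [b])).
        { rewrite Emid. simpl. rewrite <- app_assoc. reflexivity. }
        rewrite Hf in Hw'. apply walk_edge in Hw'. exact (noout v n0 Bv Hw').
Qed.


Section OneStep.
Context {V : Type} (E : V -> V -> Prop) (X Y X' Y' : V -> Prop) (x : V).
Context (P Q : list V -> Prop).
Hypothesis noinX : forall u v, X v -> ~ E u v.
Hypothesis nooutY : forall y w, Y y -> ~ E y w.
Hypothesis HP : AB_path_system E X Y P.
Hypothesis HPi : forall a, init_vertices P a <-> X a.
Hypothesis HQ : AB_path_system E X' Y' Q.
Hypothesis HQi : forall a, init_vertices Q a <-> X' a.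
Hypothesis HX' : subset X' X.
Hypothesis HY' : subset Y' Y.
Hypothesis Hx : X x.
Hypothesis Hx' : ~ X' x.

Definition X1 v := X' v \/ v = x.
Definition P1 p := P p /\ exists a t, p = a :: t /\ X1 a.

Lemma Pdisj p1 p2 v : P p1 -> P p2 -> In v p1 -> In v p2 -> p1 = p2.
Proof.
  intros H1 H2 I1 I2. destruct (classic (p1 = p2)) as [|Hne]; auto.
  exfalso. exact (proj2 HP p1 p2 H1 H2 Hne v I1 I2).
Qed.

Lemma Qdisj p1 p2 v : Q p1 -> Q p2 -> In v p1 -> In v p2 -> p1 = p2.
Proof.
  intros H1 H2 I1 I2. destruct (classic (p1 = p2)) as [|Hne]; auto.
  exfalso. exact (proj2 HQ p1 p2 H1 H2 Hne v I1 I2).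
Qed.

Lemma Pfacts p : P p -> NoDup p /\ is_walk E p /\ (exists a t, p = a :: t /\ X a) /\
    (exists l b, p = l ++ [b] /\ Y b).
Proof. intros H. apply AB_facts. exact (proj1 HP p H). Qed.

Lemma Qfacts p : Q p -> NoDup p /\ is_walk E p /\ (exists a t, p = a :: t /\ X' a) /\
    (exists l b, p = l ++ [b] /\ Y' b).
Proof. intros H. apply AB_facts. exact (proj1 HQ p H). Qed.

Definition hit (T : V -> Prop) p c :=
  exists pre suf, p = pre ++ c :: suf /\ T c /\ forall w, In w pre -> ~ T w.
Definition cut (T : V -> Prop) c :=
  T c /\ forall q a b w, Q q -> q = a ++ c :: b -> In w a -> ~ T w.
Definition good T p := exists c, hit T p c /\ cut T c.
Definition bad T p := ~ good T p.
Definition active T u := exists p, P1 p /\ bad T p /\ hit T p u.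
Definition beforeQ w u := exists q a b, Q q /\ q = a ++ u :: b /\ In w a.
Definition step (T : V -> Prop) w := T w /\ forall u, active T u -> ~ beforeQ w u.
Definition TC (T : V -> Prop) :=
  forall q a c b w, Q q -> q = a ++ c :: b -> T c -> In w b -> T w.
Definition AMOB T := forall p1 p2, P1 p1 -> P1 p2 -> bad T p1 -> bad T p2 -> p1 = p2.
Definition T0 w := exists q, Q q /\ In w q.
Fixpoint Tn n : V -> Prop := match n with 0 => T0 | S n => step (Tn n) end.
Definition Tinf w := forall n, Tn n w.

Lemma hit_unique T p c1 c2 : hit T p c1 -> hit T p c2 -> c1 = c2.
Proof.
  intros [pre1 [s1 [E1 [T1 H1]]]] [pre2 [s2 [E2 [T2 H2]]]].
  rewrite E1 in E2. destruct (first_hit_unique T _ _ _ _ _ _ E2 T1 T2 H1 H2) as [_ [? _]]; auto.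
Qed.

Lemma cut_same_q T c1 c2 q : cut T c1 -> cut T c2 -> Q q -> In c1 q -> In c2 q -> c1 = c2.
Proof.
  intros [T1 C1] [T2 C2] Hq I1 I2.
  destruct (in_split _ _ I1) as [a1 [b1 E1]].
  destruct (in_split _ _ I2) as [a2 [b2 E2]].
  assert (Heq : a1 ++ c1 :: b1 = a2 ++ c2 :: b2) by congruence.
  destruct (app_eq_app _ _ _ _ Heq) as [m [[F1 F2]|[F1 F2]]].
  - destruct m as [|d m]; simpl in F2.
    + injection F2; auto.
    + injection F2 as Hd _; subst d. exfalso. apply (C1 q a1 b1 c2 Hq E1); auto.
      rewrite F1. apply in_or_app. right. now left.
  - destruct m as [|d m]; simpl in F2.
    + injection F2; auto.
    + injection F2 as Hd _; subst d. exfalso. apply (C2 q a2 b2 c1 Hq E2); auto.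
      rewrite F1. apply in_or_app. right. now left.
Qed.

Lemma good_mono (T T' : V -> Prop) p c :
  (forall w, T' w -> T w) -> hit T p c -> cut T c -> T' c -> good T' p.
Proof.
  intros Hs [pre [suf [Ep [Tc Hpre]]]] [_ Cc] T'c. exists c. split.
  - exists pre, suf. split; [exact Ep|]. split; [exact T'c|].
    intros w Hw H. apply (Hpre w Hw); auto.
  - split; auto. intros q a b w Hq Eq Hw H. apply (Cc q a b w Hq Eq Hw); auto.
Qed.

Lemma step_sub T w : step T w -> T w.
Proof. intros [H _]; auto. Qed.

Lemma step_TC T : TC T -> TC (step T).
Proof.
  intros HT q a c b w Hq Eq [Tc Hc] Hw. split.
  - eapply HT; eauto.
  - intros u Hact [q' [a' [b' [Hq' [Eq' Hwa]]]]].
    assert (Hwq : In w q) by (rewrite Eq; apply in_or_app; right; now right).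
    assert (Hwq' : In w q') by (rewrite Eq'; apply in_or_app; now left).
    pose proof (Qdisj _ _ _ Hq Hq' Hwq Hwq') as <-.
    assert (Hca : In c a').
    { eapply nodup_before; eauto. apply (Qfacts q Hq). }
    apply (Hc u Hact). exists q, a', b'. auto.
Qed.

Lemma lemmaG T p u : AMOB T -> P1 p -> bad T p -> hit T p u -> good (step T) p.
Proof.
  intros HA HP1 Hb Hh. exists u.
  destruct Hh as [pre [suf [Ep [Tu Hpre]]]].
  assert (Hact : active T u).
  { exists p. split; [exact HP1|]. split; [exact Hb|]. exists pre, suf. auto. }
  assert (Su : step T u).
  { split; auto. intros u' [p' [HP1' [Hb' Hh']]] [q [a [b [Hq [Eq Hua]]]]].
    pose proof (HA p p' HP1 HP1' Hb Hb') as <-.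
    assert (u' = u). { eapply hit_unique; eauto. exists pre, suf; auto. }
    subst u'.
    apply (nodup_disj a (u :: b) u); auto.
    - rewrite <- Eq. apply (Qfacts q Hq).
    - now left. }
  split.
  - exists pre, suf. split; [exact Ep|]. split; [exact Su|].
    intros w Hw Sw. apply (Hpre w Hw). apply Sw.
  - split; auto. intros q a b w Hq Eq Hw [_ Sw]. apply (Sw u Hact).
    exists q, a, b. auto.
Qed.

Lemma step_AMOB T : AMOB T -> AMOB (step T).
Proof.
  intros HA.
  assert (Rm : forall p, good T p -> bad (step T) p ->
     exists c u, hit T p c /\ cut T c /\ active T u /\ beforeQ c u).
  { intros p [c [Hh Hc]] Hb.
    destruct (classic (exists u, active T u /\ beforeQ c u)) as [[u [Hu1 Hu2]]|Hn].
    - exists c, u. auto.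
    - exfalso. apply Hb. apply (good_mono T (step T) p c (step_sub T) Hh Hc).
      split; [apply Hc|]. intros u Hu Hbef. apply Hn. eauto. }
  intros p1 p2 H1 H2 B1 B2.
  destruct (classic (good T p1)) as [G1|G1]; destruct (classic (good T p2)) as [G2|G2].
  - destruct (Rm p1 G1 B1) as [c1 [u1 [Hh1 [Hc1 [[p1s [HPs1 [Hbs1 Hhs1]]] Hb1]]]]].
    destruct (Rm p2 G2 B2) as [c2 [u2 [Hh2 [Hc2 [[p2s [HPs2 [Hbs2 Hhs2]]] Hb2]]]]].
    pose proof (HA _ _ HPs1 HPs2 Hbs1 Hbs2) as <-.
    pose proof (hit_unique _ _ _ _ Hhs1 Hhs2) as <-.
    destruct Hb1 as [q1 [a1 [b1 [Hq1 [Eq1 Hca1]]]]].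
    destruct Hb2 as [q2 [a2 [b2 [Hq2 [Eq2 Hca2]]]]].
    assert (Hqq : q1 = q2).
    { apply (Qdisj _ _ u1 Hq1 Hq2).
      - rewrite Eq1; apply in_or_app; right; now left.
      - rewrite Eq2; apply in_or_app; right; now left. }
    rewrite <- Hqq in Eq2.
    assert (Hcc : c1 = c2).
    { apply (cut_same_q T c1 c2 q1 Hc1 Hc2 Hq1).
      - rewrite Eq1; apply in_or_app; now left.
      - rewrite Eq2; apply in_or_app; now left. }
    rewrite <- Hcc in Hh2.
    destruct Hh1 as [pr1 [s1 [Ep1 _]]]. destruct Hh2 as [pr2 [s2 [Ep2 _]]].
    apply (Pdisj p1 p2 c1); [apply H1|apply H2| |].
    + rewrite Ep1; apply in_or_app; right; now left.
    + rewrite Ep2; apply in_or_app; right; now left.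
  - exfalso.
    destruct (Rm p1 G1 B1) as [c1 [u1 [Hh1 [Hc1 [[p1s [HPs1 [Hbs1 Hhs1]]] Hb1]]]]].
    pose proof (HA _ _ HPs1 H2 Hbs1 G2) as <-.
    apply B2. eapply lemmaG; eauto.
  - exfalso.
    destruct (Rm p2 G2 B2) as [c2 [u2 [Hh2 [Hc2 [[p2s [HPs2 [Hbs2 Hhs2]]] Hb2]]]]].
    pose proof (HA _ _ HPs2 H1 Hbs2 G1) as <-.
    apply B1. eapply lemmaG; eauto.
  - apply HA; auto.
Qed.


Lemma T0_TC : TC T0.
Proof. intros q a c b w Hq Eq _ Hw. exists q. split; auto. rewrite Eq. apply in_or_app. right. now right. Qed.

Lemma X'_good p : P1 p -> (exists a t, p = a :: t /\ X' a) -> good T0 p.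
Proof.
  intros HP1 [a [t [Ep Ha]]].
  apply HQi in Ha. destruct Ha as [q [Hq Hhd]].
  destruct q as [|a' qt]; [discriminate|]. injection Hhd as ->.
  exists a. split.
  - exists [], t. split; [exact Ep|]. split.
    + exists (a :: qt). split; auto. now left.
    + simpl; tauto.
  - split.
    + exists (a :: qt). split; auto. now left.
    + intros q' a' b' w Hq' Eq' Hw _.
      assert (Haq' : In a q') by (rewrite Eq'; apply in_or_app; right; now left).
      pose proof (Qdisj _ _ a Hq Hq' (or_introl eq_refl) Haq') as <-.
      destruct a' as [|d a'']; [contradiction|].
      simpl in Eq'. injection Eq' as <- Eq''.
      pose proof (proj1 (Qfacts _ Hq)) as ND. rewrite Eq'' in ND.
      inversion ND as [|? ? Hn _]. apply Hn. apply in_or_app. right. now left.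
Qed.

Lemma T0_AMOB : AMOB T0.
Proof.
  intros p1 p2 H1 H2 B1 B2.
  destruct (proj2 H1) as [a1 [t1 [E1 [Ha1| ->]]]].
  { exfalso. apply B1. apply X'_good; eauto. }
  destruct (proj2 H2) as [a2 [t2 [E2 [Ha2| ->]]]].
  { exfalso. apply B2. apply X'_good; eauto. }
  apply (Pdisj p1 p2 x (proj1 H1) (proj1 H2)).
  - rewrite E1; now left.
  - rewrite E2; now left.
Qed.

Lemma Tn_inv n : TC (Tn n) /\ AMOB (Tn n).
Proof.
  induction n as [|n [IH1 IH2]]; simpl.
  - split; [apply T0_TC|apply T0_AMOB].
  - split; [apply step_TC; auto|apply step_AMOB; auto].
Qed.

Lemma Tn_mono m n : m <= n -> forall w, Tn n w -> Tn m w.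
Proof.
  induction 1; auto. intros w H0. apply IHle. apply step_sub. exact H0.
Qed.

Lemma stab (L : list V) : exists N, forall n, N <= n -> forall w, In w L -> Tn n w -> Tinf w.
Proof.
  induction L as [|a L [N IH]].
  - exists 0. simpl. tauto.
  - destruct (classic (Tinf a)) as [Ha|Ha].
    + exists N. intros n Hn w [<-|Hw] Hnw; auto. eapply IH; eauto.
    + apply not_all_ex_not in Ha. destruct Ha as [k Hk].
      exists (Nat.max N k). intros n Hn w [<-|Hw] Hnw.
      * exfalso. apply Hk. apply (Tn_mono k n); auto. lia.
      * apply (IH n); auto. lia.
Qed.

Lemma bad_inf_bad_n p : bad Tinf p -> exists N, forall n, N <= n -> bad (Tn n) p.
Proof.
  intros Hb. destruct (stab p) as [N HN]. exists N. intros n Hn Hg. apply Hb.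
  destruct Hg as [c [[pre [suf [Ep [Tc Hpre]]]] [_ Cc]]].
  assert (Hcp : In c p) by (rewrite Ep; apply in_or_app; right; now left).
  exists c. split.
  - exists pre, suf. split; [exact Ep|]. split.
    + exact (HN n Hn c Hcp Tc).
    + intros w Hw Tw. apply (Hpre w Hw). apply Tw.
  - split; [exact (HN n Hn c Hcp Tc)|].
    intros q a b w Hq Eq Hw Tw. apply (Cc q a b w Hq Eq Hw). apply Tw.
Qed.

Lemma Tinf_AMOB : AMOB Tinf.
Proof.
  intros p1 p2 H1 H2 B1 B2.
  destruct (bad_inf_bad_n p1 B1) as [N1 HN1].
  destruct (bad_inf_bad_n p2 B2) as [N2 HN2].
  apply (proj2 (Tn_inv (Nat.max N1 N2))); auto.
  - apply HN1; lia.
  - apply HN2; lia.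
Qed.

Lemma Tinf_TC : TC Tinf.
Proof.
  intros q a c b w Hq Eq Tc Hw n. apply (proj1 (Tn_inv n) q a c b w Hq Eq); auto.
Qed.

Lemma bad_inf_avoid p : P1 p -> bad Tinf p -> forall w, In w p -> ~ Tinf w.
Proof.
  intros HP1 Hb w Hw Tw.
  destruct (first_hit_exists Tinf p) as [Hav|[pre [c [suf [Ep [Tc Hpre]]]]]].
  { exact (Hav w Hw Tw). }
  destruct (classic (exists q a b w', Q q /\ q = a ++ c :: b /\ In w' a /\ Tinf w'))
    as [[q [a [b [w' [Hq [Eq [Hw' Tw']]]]]]]|Hn].
  2:{ apply Hb. exists c. split.
      - exists pre, suf. auto.
      - split; auto. intros q a b w' Hq Eq Hw' Tw'. apply Hn. eauto 10. }
  destruct (bad_inf_bad_n p Hb) as [N1 HN1].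
  destruct (stab p) as [N2 HN2].
  set (n := Nat.max N1 N2).
  assert (Hact : active (Tn n) c).
  { exists p. split; [exact HP1|]. split; [apply HN1; lia|].
    exists pre, suf. split; [exact Ep|]. split; [apply Tc|].
    intros w'' Hw'' T''. apply (Hpre w'' Hw'').
    apply (HN2 n); [lia| |exact T''].
    rewrite Ep; apply in_or_app; now left. }
  pose proof (Tw' (S n)) as HS. simpl in HS. destruct HS as [_ HS].
  apply (HS c Hact). exists q, a, b. auto.
Qed.

Definition R r := exists p, P1 p /\
  ((exists pre c suf q qa qs, p = pre ++ c :: suf /\ (forall w, In w pre -> ~ Tinf w) /\
      Tinf c /\ cut Tinf c /\ Q q /\ q = qa ++ c :: qs /\ r = pre ++ c :: qs) \/
   ((forall w, In w p -> ~ Tinf w) /\ r = p)).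

Definition Y1 v := Y' v \/ exists p l, P1 p /\ (forall w, In w p -> ~ Tinf w) /\ p = l ++ [v].

Lemma X1_sub : subset X1 X.
Proof. intros v [H| ->]; auto. Qed.

Lemma Y1_sub : subset Y1 Y.
Proof.
  intros v [H|[p [l [HP1 [_ Ep]]]]]; auto.
  destruct (Pfacts p (proj1 HP1)) as [_ [_ [_ [l' [b [Ep' Hb]]]]]].
  rewrite Ep in Ep'. apply app_inj_tail in Ep'. destruct Ep' as [_ ->]. auto.
Qed.

Lemma tail_in_T q qa c qs w : Q q -> q = qa ++ c :: qs -> Tinf c -> In w (c :: qs) -> Tinf w.
Proof.
  intros Hq Eq Tc [<-|Hw]; auto. eapply Tinf_TC; eauto.
Qed.

Lemma R_AB r : R r -> AB_path E X1 Y1 r.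
Proof.
  intros [p [HP1 [[pre [c [suf [q [qa [qs [Ep [Hpre [Tc [Cc [Hq [Eq Er]]]]]]]]]]]]|[Hav Er]]]].
  - destruct (Pfacts p (proj1 HP1)) as [NDp [Wp _]].
    destruct (Qfacts q Hq) as [NDq [Wq [_ [l [b [Eql Hb]]]]]].
    destruct (proj2 HP1) as [a [t [Ep' Ha]]].
    rewrite Eql in Eq.
    destruct (suffix_last qa (c :: qs) l b (eq_sym Eq)) as [l' El']; [discriminate|].
    assert (Hstart : exists t', r = a :: t').
    { destruct pre as [|d pre'].
      - simpl in Ep. rewrite Ep in Ep'. injection Ep' as -> _. exists qs. auto.
      - simpl in Ep. rewrite Ep in Ep'. injection Ep' as -> _. eexists. rewrite Er. reflexivity. }
    destruct Hstart as [t' Et'].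
    apply (mkAB E X Y X1 Y1 r a t' (pre ++ l') b noinX nooutY X1_sub Y1_sub); auto.
    + rewrite Er. apply NoDup_app.
      * rewrite Ep in NDp. apply NoDup_app_remove_r in NDp. exact NDp.
      * rewrite Eql, Eq in NDq. apply NoDup_app_remove_l in NDq. exact NDq.
      * intros w Hw1 Hw2. apply (Hpre w Hw1). apply (tail_in_T q qa c qs w Hq); auto.
        rewrite Eql; exact Eq.
    + rewrite Er. apply walk_app. split.
      * rewrite Ep in Wp. apply walk_app in Wp. tauto.
      * rewrite Eql, Eq in Wq. apply walk_app in Wq. tauto.
    + rewrite Er, El'. rewrite app_assoc. reflexivity.
    + left. exact Hb.
  - subst r. destruct (Pfacts p (proj1 HP1)) as [NDp [Wp [_ [l [b [El Hb]]]]]].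
    destruct (proj2 HP1) as [a [t [Ep' Ha]]].
    apply (mkAB E X Y X1 Y1 p a t l b noinX nooutY X1_sub Y1_sub); auto.
    right. exists p, l. auto.
Qed.

Lemma avoid_bad p : (forall w, In w p -> ~ Tinf w) -> bad Tinf p.
Proof.
  intros Hav [c [[pre [suf [Ep [Tc _]]]] _]]. apply (Hav c); auto.
  rewrite Ep; apply in_or_app; right; now left.
Qed.

Lemma R_disj r1 r2 : R r1 -> R r2 -> r1 <> r2 -> forall v, In v r1 -> ~ In v r2.
Proof.
  intros [p1 [H1 C1]] [p2 [H2 C2]] Hne v Hv1 Hv2.
  destruct C1 as [[pre1 [c1 [suf1 [q1 [qa1 [qs1 [Ep1 [Hpre1 [Tc1 [Cc1 [Hq1 [Eq1 Er1]]]]]]]]]]]]|[Hav1 Er1]];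
  destruct C2 as [[pre2 [c2 [suf2 [q2 [qa2 [qs2 [Ep2 [Hpre2 [Tc2 [Cc2 [Hq2 [Eq2 Er2]]]]]]]]]]]]|[Hav2 Er2]].
  - subst r1 r2.
    assert (Hc1p : In c1 p1) by (rewrite Ep1; apply in_or_app; right; now left).
    assert (Hc2p : In c2 p2) by (rewrite Ep2; apply in_or_app; right; now left).
    destruct (classic (p1 = p2)) as [Hp|Hp].
    + rewrite <- Hp in Ep2. rewrite Ep1 in Ep2.
      destruct (first_hit_unique Tinf _ _ _ _ _ _ Ep2 Tc1 Tc2 Hpre1 Hpre2) as [<- [<- <-]].
      assert (Hqq : q1 = q2).
      { apply (Qdisj _ _ c1 Hq1 Hq2).
        - rewrite Eq1; apply in_or_app; right; now left.
        - rewrite Eq2; apply in_or_app; right; now left. }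
      rewrite <- Hqq in Eq2. rewrite Eq1 in Eq2.
      destruct (nodup_split_unique _ _ _ _ _ (ltac:(rewrite <- Eq1; apply (Qfacts q1 Hq1))) Eq2)
        as [_ <-].
      apply Hne. reflexivity.
    + apply in_app_or in Hv1. apply in_app_or in Hv2.
      destruct Hv1 as [Hv1|Hv1]; destruct Hv2 as [Hv2|Hv2].
      * apply Hp. apply (Pdisj p1 p2 v (proj1 H1) (proj1 H2)).
        -- rewrite Ep1; apply in_or_app; now left.
        -- rewrite Ep2; apply in_or_app; now left.
      * apply (Hpre1 v Hv1). exact (tail_in_T q2 qa2 c2 qs2 v Hq2 Eq2 Tc2 Hv2).
      * apply (Hpre2 v Hv2). exact (tail_in_T q1 qa1 c1 qs1 v Hq1 Eq1 Tc1 Hv1).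
      * assert (Hqq : q1 = q2).
        { apply (Qdisj _ _ v Hq1 Hq2).
          - rewrite Eq1; apply in_or_app; right; exact Hv1.
          - rewrite Eq2; apply in_or_app; right; exact Hv2. }
        rewrite <- Hqq in Eq2.
        assert (Hcc : c1 = c2).
        { apply (cut_same_q Tinf c1 c2 q1 Cc1 Cc2 Hq1).
          - rewrite Eq1; apply in_or_app; right; now left.
          - rewrite Eq2; apply in_or_app; right; now left. }
        rewrite <- Hcc in Hc2p.
        apply Hp. exact (Pdisj p1 p2 c1 (proj1 H1) (proj1 H2) Hc1p Hc2p).
  - subst r1 r2.
    assert (Hc1p : In c1 p1) by (rewrite Ep1; apply in_or_app; right; now left).
    apply in_app_or in Hv1. destruct Hv1 as [Hv1|Hv1].
    + assert (Hv1' : In v p1) by (rewrite Ep1; apply in_or_app; now left).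
      pose proof (Pdisj p1 p2 v (proj1 H1) (proj1 H2) Hv1' Hv2) as <-.
      exact (Hav2 c1 Hc1p Tc1).
    + apply (Hav2 v Hv2). exact (tail_in_T q1 qa1 c1 qs1 v Hq1 Eq1 Tc1 Hv1).
  - subst r1 r2.
    assert (Hc2p : In c2 p2) by (rewrite Ep2; apply in_or_app; right; now left).
    apply in_app_or in Hv2. destruct Hv2 as [Hv2|Hv2].
    + assert (Hv2' : In v p2) by (rewrite Ep2; apply in_or_app; now left).
      pose proof (Pdisj p1 p2 v (proj1 H1) (proj1 H2) Hv1 Hv2') as <-.
      exact (Hav1 c2 Hc2p Tc2).
    + apply (Hav1 v Hv1). exact (tail_in_T q2 qa2 c2 qs2 v Hq2 Eq2 Tc2 Hv2).
  - subst r1 r2. apply Hne. exact (Pdisj p1 p2 v (proj1 H1) (proj1 H2) Hv1 Hv2).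
Qed.

Lemma R_init a : init_vertices R a <-> X1 a.
Proof.
  split.
  - intros [r [Hr Hhd]]. destruct (AB_facts _ _ _ _ (R_AB r Hr)) as [_ [_ [[a' [t [-> Ha]]] _]]].
    injection Hhd as ->. exact Ha.
  - intros Ha. assert (HXa : X a) by (apply X1_sub; exact Ha).
    apply HPi in HXa. destruct HXa as [p [Hp Hhd]].
    destruct p as [|a' t]; [discriminate|]. injection Hhd as ->.
    assert (HP1 : P1 (a :: t)) by (split; auto; exists a, t; auto).
    destruct (first_hit_exists Tinf (a :: t)) as [Hav|[pre [c [suf [Ep [Tc Hpre]]]]]].
    + exists (a :: t). split; [|reflexivity]. exists (a :: t). split; auto.
    + destruct (classic (cut Tinf c)) as [Cc|Cc].
      * destruct (Tc 0) as [q [Hq Hcq]].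
        destruct (in_split _ _ Hcq) as [qa [qs Eq]].
        exists (pre ++ c :: qs). split.
        -- exists (a :: t). split; auto. left. exists pre, c, suf, q, qa, qs. auto 10.
        -- destruct pre as [|d pre']; simpl in Ep |- *; injection Ep as -> _; reflexivity.
      * exfalso.
        assert (Hb : bad Tinf (a :: t)).
        { intros [c' [Hh' Cc']]. assert (Hh : hit Tinf (a :: t) c) by (exists pre, suf; auto).
          pose proof (hit_unique _ _ _ _ Hh Hh') as <-. exact (Cc Cc'). }
        apply (bad_inf_avoid (a :: t) HP1 Hb c); auto.
        rewrite Ep; apply in_or_app; right; now left.
Qed.

Lemma Y1_uniq v1 v2 : Y1 v1 -> ~ Y' v1 -> Y1 v2 -> ~ Y' v2 -> v1 = v2.
Proof.
  intros [H1|[p1 [l1 [HP1 [Hav1 E1]]]]] N1; [contradiction|].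
  intros [H2|[p2 [l2 [HP2 [Hav2 E2]]]]] N2; [contradiction|].
  pose proof (Tinf_AMOB p1 p2 HP1 HP2 (avoid_bad p1 Hav1) (avoid_bad p2 Hav2)) as <-.
  rewrite E1 in E2. apply app_inj_tail in E2. destruct E2; auto.
Qed.

Lemma one_step : exists Y1 : V -> Prop, subset Y1 Y /\ joinable E (fun v => X' v \/ v = x) Y1 /\
  (forall v1 v2, Y1 v1 -> ~ Y' v1 -> Y1 v2 -> ~ Y' v2 -> v1 = v2).
Proof.
  exists Y1. split; [exact Y1_sub|]. split; [|exact Y1_uniq].
  exists R. split; [split; [exact R_AB|exact R_disj]|exact R_init].
Qed.

End OneStep.





Lemma join_equiv {V} (E : V -> V -> Prop) (X Y A A' B : V -> Prop) :
  (forall u v, X v -> ~ E u v) -> (forall y w, Y y -> ~ E y w) ->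
  subset B Y -> (forall v, A v <-> A' v) -> subset A' X ->
  joinable E A B -> joinable E A' B.
Proof.
  intros noin noout HB HAA HA' [Pp [[HPa HPd] HPi]].
  exists Pp. split; [split; auto|].
  - intros p Hp. destruct (AB_facts _ _ _ _ (HPa p Hp)) as [ND [W [[a [t [Ea Ha]]] [l [b [El Hb]]]]]].
    apply (mkAB E X Y A' B p a t l b noin noout HA' HB ND W Ea); auto. apply HAA; auto.
  - intros a. rewrite HPi. apply HAA.
Qed.

Lemma main_ind {V} (E : V -> V -> Prop) (X Y : V -> Prop) (l : list V) :
  (forall u v, X v -> ~ E u v) -> (forall y w, Y y -> ~ E y w) ->
  joinable E X Y ->
  forall X' Y', subset X' X -> subset Y' Y -> joinable E X' Y' ->
  (forall v, X v -> ~ X' v -> In v l) ->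
  exists Y'' : V -> Prop,
    subset Y'' Y /\ joinable E X Y'' /\ card_le (setminus Y'' Y') (setminus X X').
Proof.
  intros noin noout HXY. induction l as [|x l IH]; intros X' Y' HX' HY' HJ Hl.
  - exists Y'. split; [exact HY'|]. split.
    + apply (join_equiv E X Y X' X Y' noin noout HY'); auto.
      * intros v. split; [apply HX'|]. intros Hv. apply NNPP. intros Hn. exact (Hl v Hv Hn).
      * intros v Hv; exact Hv.
    + exists (fun v => v). split; [intros v [H1 H2]; contradiction|].
      intros u v [H1 H2]; contradiction.
  - destruct (classic (X x /\ ~ X' x)) as [[Hx Hx']|Hn].
    + destruct HXY as [Pp [HP HPi]]. destruct HJ as [Qq [HQ HQi]].
      destruct (one_step E X Y X' Y' x Pp Qq noin noout HP HPi HQ HQi HX' HY' Hx)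
        as [Y1 [HY1 [HJ1 HU1]]].
      destruct (IH (fun v => X' v \/ v = x) Y1) as [Y'' [HY'' [HJ'' [h [Hh1 Hh2]]]]]; auto.
      * intros v [Hv| ->]; auto.
      * intros v Hv Hn. destruct (Hl v Hv (fun H => Hn (or_introl H))) as [<-|Hin]; auto.
        exfalso. apply Hn. now right.
      * exists Y''. split; [exact HY''|]. split; [exact HJ''|].
        exists (fun v => if excluded_middle_informative (Y1 v) then x else h v).
        split.
        -- intros v [Hv1 Hv2]. destruct (excluded_middle_informative (Y1 v)) as [Hy|Hy].
           ++ split; auto.
           ++ destruct (Hh1 v (conj Hv1 Hy)) as [Hx1 Hx2]. split; auto.
        -- intros u v [Hu1 Hu2] [Hv1 Hv2].
           destruct (excluded_middle_informative (Y1 u)) as [Hyu|Hyu];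
           destruct (excluded_middle_informative (Y1 v)) as [Hyv|Hyv]; intros Heq.
           ++ apply HU1; auto.
           ++ exfalso. destruct (Hh1 v (conj Hv1 Hyv)) as [_ Hn]. apply Hn. right. auto.
           ++ exfalso. destruct (Hh1 u (conj Hu1 Hyu)) as [_ Hn]. apply Hn. right. auto.
           ++ apply Hh2; auto. split; auto. split; auto.
    + apply IH; auto. intros v Hv Hv'. destruct (Hl v Hv Hv') as [<-|Hin]; auto.
      exfalso. apply Hn. auto.
Qed.

Theorem lemma4p3 (V : Type) (E : V -> V -> Prop) (X Y X' Y' : V -> Prop) :
  (forall v, ~ E v v) ->
  (forall u x, X x -> ~ E u x) ->
  (forall y w, Y y -> ~ E y w) ->
  joinable E X Y ->
  subset X' X -> subset Y' Y ->
  joinable E X' Y' ->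
  finite_set (setminus X X') ->
  exists Y'' : V -> Prop,
    subset Y'' Y /\ joinable E X Y'' /\
    card_le (setminus Y'' Y') (setminus X X').
Proof.
  intros _ noin noout HXY HX' HY' HJ [l Hl].
  apply (main_ind E X Y l noin noout HXY X' Y' HX' HY' HJ).
  intros v Hv Hv'. apply Hl. split; auto.
Qed.
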